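(* Every finite tree $G$ is diagonal, i.e. $\mathrm{MH}_{k,l}(G)=0$ whenever $k\neq l$.
   Context: All graphs are finite, simple, undirected and connected; $d$ denotes the shortest-path distance on the vertex set $V(G)$. For vertices $x_0,\dots,x_k$ put $\ell(x_0,\dots,x_k)=\sum_{i=0}^{k-1}d(x_i,x_{i+1})$. The magnitude chain complex: $\mathrm{MC}_{k,l}(G)$ is the free abelian group on $I_{k,l}(G)=\{(x_0,\dots,x_k)\in V(G)^{k+1}: x_i\neq x_{i+1}\text{ for all } i,\ \ell(x_0,\dots,x_k)=l\}$, with differential $\partial:\mathrm{MC}_{k,l}(G)\to\mathrm{MC}_{k-1,l}(G)$, $\partial=\sum_{i=1}^{k-1}(-1)^i\partial_i$, where $\partial_i(x_0,\dots,x_k)=(x_0,\dots,\hat x_i,\dots,x_k)$ if $\ell(x_0,\dots,\hat x_i,\dots,x_k)=\ell(x_0,\dots,x_k)$ and $\partial_i(x_0,\dots,x_k)=0$ otherwise. The magnitude homology is $\mathrm{MH}_{k,l}(G)=H_k(\mathrm{MC}_{*,l}(G))$. A graph $G$ is called diagonal if $\mathrm{MH}_{k,l}(G)=0$ whenever $k\neq l$. *)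

(* Defs.v *)
From HB Require Import structures.
From mathcomp Require Import all_boot all_order all_algebra.
Set Implicit Arguments. Unset Strict Implicit. Unset Printing Implicit Defensive.
Import Order.TTheory GRing.Theory Num.Theory.

(* A simple graph on a finite vertex type T is a symmetric irreflexive
   relation e : rel T. *)

(* Finite trees: connected and without cycles (a cycle is a duplicate-free
   closed walk x_0 ... x_{n-1} x_0 with n >= 3). *)
Definition is_tree (T : finType) (e : rel T) : Prop :=
  symmetric e /\ irreflexive e /\
  (forall x y : T, connect e x y) /\
  (forall c : seq T, uniq c -> 3 <= size c -> ~~ cycle e c).

Definition walk_len (T : finType) (e : rel T) (x y : T) (n : nat) : bool :=
  [exists p : n.-tuple T, path e x p && (last x p == y)].

(* Shortest-path distance: least n with a walk of length n from x to y
   (in a connected graph such n exists and is < #|T|). *)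
Definition gdist (T : finType) (e : rel T) (x y : T) : nat :=
  find (walk_len e x y) (iota 0 #|T|).

Definition ell (T : finType) (e : rel T) (s : seq T) : nat :=
  match s with
  | [::] => 0
  | x :: s' => sumn (pairmap (gdist e) x s')
  end.

(* membership in I_{k,l}: consecutive entries distinct and length l *)
Definition in_I (T : finType) (e : rel T) (l : nat) (s : seq T) : bool :=
  sorted (fun a b : T => a != b) s && (ell e s == l).

Definition del_at (T : Type) (i : nat) (s : seq T) : seq T :=
  take i s ++ drop i.+1 s.

(* Chains in MC_{k,l}: integer-valued functions on (k+1)-tuples supported
   on I_{k,l} (free abelian group on the finite set I_{k,l}). *)
Definition is_chain (T : finType) (e : rel T) (k l : nat)
  (c : {ffun k.+1.-tuple T -> int}) : Prop :=
  forall x : k.+1.-tuple T, ~~ in_I e l x -> c x = 0%R.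

(* The differential  d = sum_{i=1}^{k-1} (-1)^i d_i  : MC_{k,*} -> MC_{k-1,*},
   written on coefficient functions: (d c)(y) = sum over x and i with
   d_i x = y (nonzero, i.e. length-preserving) of (-1)^i c(x).
   For k = 0 it is the zero map (empty sum). *)
Definition mdiff (T : finType) (e : rel T) (k : nat)
  (c : {ffun k.+1.-tuple T -> int}) : {ffun k.-tuple T -> int} :=
  [ffun y : k.-tuple T =>
     (\sum_(x : k.+1.-tuple T) \sum_(1 <= i < k)
        (if (ell e (del_at i x) == ell e x) && (del_at i x == y :> seq T)
         then (-1) ^+ i * c x else 0))%R].

Definition MH_vanishes (T : finType) (e : rel T) (k l : nat) : Prop :=
  forall c : {ffun k.+1.-tuple T -> int},
    is_chain e l c -> mdiff e c = 0%R ->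
    exists b : {ffun k.+2.-tuple T -> int}, is_chain e l b /\ mdiff e b = c.

Definition diagonal (T : finType) (e : rel T) : Prop :=
  forall k l : nat, k <> l -> MH_vanishes e k l.

(* Main.v *)
Require Import Defs.
From mathcomp Require Import all_boot all_order all_algebra zify.
Set Implicit Arguments.
Import GRing.Theory. Unset Strict Implicit. Unset Printing Implicit Defensive.

Ltac show := match goal with |- ?G => idtac G end.

Section Metric.
Variable (T : finType) (e : rel T).
Hypothesis esy : symmetric e.
Hypothesis econn : forall x y, connect e x y.
Local Notation d := (gdist e).

Lemma walk_lenP x y n :
  reflect (exists p, [/\ size p = n, path e x p & last x p = y]) (walk_len e x y n).
Proof.
apply: (iffP existsP) => [[p /andP[pp /eqP lp]]|[p [sp pp lp]]].
- by exists p; rewrite size_tuple.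
- have sp' : size p == n by rewrite sp.
  by exists (Tuple sp'); rewrite /= pp lp eqxx.
Qed.

Lemma walk_conn x y : has (walk_len e x y) (iota 0 #|T|).
Proof.
have /connectP[p pp lp] := econn x y.
case/shortenP: pp lp => p' pp' up' _ lp'.
apply/hasP; exists (size p').
  rewrite mem_iota add0n.
  have := max_card (mem (x :: p')).
  by rewrite (card_uniqP up').
by apply/walk_lenP; exists p'.
Qed.

Lemma d_lt x y : d x y < #|T|.
Proof. by have := walk_conn x y; rewrite has_find size_iota. Qed.

Lemma d_walk x y : walk_len e x y (d x y).
Proof.
have := nth_find 0 (walk_conn x y).
by rewrite nth_iota ?add0n //; exact: d_lt.
Qed.

Lemma d_min x y n : walk_len e x y n -> d x y <= n.
Proof.
move=> w; rewrite leqNgt; apply/negP => lt.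
have := before_find 0 lt; rewrite nth_iota ?add0n ?w //.
exact: ltn_trans lt (d_lt x y).
Qed.

Lemma d_refl x : d x x = 0.
Proof. by apply/eqP; rewrite -leqn0; apply: d_min; apply/walk_lenP; exists [::]. Qed.

Lemma d_eq0 x y : d x y = 0 -> x = y.
Proof. by move=> h; have /walk_lenP[p [sp _ <-]] := d_walk x y; move: sp; rewrite h => /size0nil ->. Qed.

Lemma d_tri x y z : d x z <= d x y + d y z.
Proof.
have /walk_lenP[p [sp pp lp]] := d_walk x y.
have /walk_lenP[q [sq pq lq]] := d_walk y z.
apply: d_min; apply/walk_lenP; exists (p ++ q).
by rewrite size_cat sp sq cat_path last_cat pp lp pq lq.
Qed.

Lemma d_edge_le x y : e x y -> d x y <= 1.
Proof. by move=> exy; apply: d_min; apply/walk_lenP; exists [:: y]; rewrite /= exy. Qed.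

Lemma d_one x y : d x y = 1 -> e x y.
Proof.
move=> h; have /walk_lenP[p [sp pp lp]] := d_walk x y.
by move: sp pp lp; rewrite h; case: p => [|a [|]] //= _; rewrite andbT => ? <-.
Qed.

Lemma d_next a b n : d a b = n.+1 -> exists2 u, e a u & d u b = n.
Proof.
move=> h; have /walk_lenP[p [sp pp lp]] := d_walk a b.
move: sp pp lp; rewrite h; case: p => [|u p] //= [sp] /andP[eau pp] lp.
exists u => //; apply/eqP; rewrite eqn_leq d_min; last by apply/walk_lenP; exists p.
have : d a b <= d a u + d u b by apply: d_tri.
have : d a u <= 1 by apply: d_edge_le.
by rewrite h; lia.
Qed.


Hypothesis eirr : irreflexive e.
Hypothesis acyc : forall c : seq T, uniq c -> 3 <= size c -> ~~ cycle e c.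

Lemma d_pos x y : x != y -> 0 < d x y.
Proof. by move=> nxy; rewrite lt0n; apply/eqP => /d_eq0 h; rewrite h eqxx in nxy. Qed.

Lemma d_edge x y : e x y -> d x y = 1.
Proof.
move=> exy; apply/eqP; rewrite eqn_leq d_edge_le // d_pos //.
by apply/eqP => h; move: exy; rewrite h eirr.
Qed.

Lemma d_adj a u b : e a u -> d u b <= d a b + 1 /\ d a b <= d u b + 1.
Proof.
move=> eau; have h1 := d_edge eau.
have h2 : d u a = 1 by apply: d_edge; rewrite esy.
have := d_tri u a b; have := d_tri a u b; lia.
Qed.

Lemma geo_join b m : forall s t, s != t -> d s b = m -> d t b = m ->
  exists w, [/\ path e s w, last s w = t, uniq (s :: w), 2 <= size w &
             all (fun v => d v b <= m) (s :: w)].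
Proof.
elim: m => [|m IH] s t nst ds dt.
  by move: nst; rewrite (d_eq0 ds) (d_eq0 dt) eqxx.
have [s' ess' ds'] := d_next ds.
have [t' ett' dt'] := d_next dt.
case: (eqVneq s' t') => [eq|nst'].
  exists [:: s'; t]; split => //=.
  - by rewrite ess' eq esy ett'.
  - rewrite !inE negb_or nst andbT; apply/and3P; split => //.
      by apply/eqP => h; move: ds; rewrite h ds'; lia.
    by apply/eqP => h; move: dt; rewrite -h eq dt'; lia.
  - by rewrite ds ds' dt !leqnn leqnSn.
have [w [pw lw uw sw aw]] := IH s' t' nst' ds' dt'.
have notin v : v \in s' :: w -> d v b <= m by move=> vin; exact: (allP aw).
exists (s' :: rcons w t); split => //=.
- rewrite ess' -cats1 cat_path pw /= lw andbT esy //.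
- by rewrite last_rcons.
- have sn : s \notin s' :: w by apply/negP => /notin; rewrite ds ltnn.
  have tn : t \notin s' :: w by apply/negP => /notin; rewrite dt ltnn.
  rewrite -rcons_cons mem_rcons -cons_uniq -rcons_cons rcons_uniq inE negb_or nst sn tn /=.
  by move: uw => /= /andP[-> ->].
- by rewrite size_rcons.
- rewrite ds leqnn ds' leqnSn /= all_rcons dt leqnn /=.
  apply/allP => v vw; have := notin v; rewrite inE vw orbT => /(_ isT); lia.
Qed.

Lemma par a u b : e a u -> d u b <> d a b.
Proof.
move=> eau h.
have nau : a != u by apply/eqP => h'; move: eau; rewrite h' eirr.
have [w [pw lw uw sw _]] := geo_join nau erefl h.
have := acyc uw; rewrite /= ltnS sw => /(_ isT); apply/negP/negPn.
by rewrite rcons_path pw lw esy.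
Qed.

Lemma adj_cases a u b : e a u -> d u b = d a b + 1 \/ d u b + 1 = d a b.
Proof. by move=> eau; have := @d_adj _ _ b eau; have := @par a u b eau; lia. Qed.

Lemma uniq_next a u u' b : e a u -> e a u' -> d u b < d a b -> d u' b < d a b -> u = u'.
Proof.
move=> eau eau' lt lt'; apply/eqP/negPn/negP => nuu.
have := @d_adj _ _ b eau; have := @d_adj _ _ b eau' => h1 h2.
have e1 : d u' b = d u b by lia.
have [w [pw lw uw sw aw]] := geo_join nuu erefl e1.
have ain : a \notin u :: w.
  by apply/negP => /(allP aw); lia.
have := @acyc (a :: u :: w); rewrite cons_uniq ain uw /= ltnS.
move=> /(_ isT (ltn_trans (isT : 0 < 1) sw)); apply/negP/negPn.
by rewrite /= eau rcons_path pw lw esy eau'.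
Qed.

Definition nxt a b := odflt a [pick u | e a u && (d u b < d a b)].

Lemma nxt_spec a b : 0 < d a b -> e a (nxt a b) /\ d (nxt a b) b + 1 = d a b.
Proof.
move=> pos; rewrite /nxt; case: pickP => [u /andP[eau lt]|none] /=.
  by split => //; have := @d_adj _ _ b eau; lia.
have [n dn] : exists n, d a b = n.+1 by exists (d a b).-1; lia.
have [u eau du] := d_next dn.
by have := none u; rewrite eau du dn ltnSn.
Qed.

Lemma nxt_uniq a u b : e a u -> d u b + 1 = d a b -> nxt a b = u.
Proof.
move=> eau h; have [e1 h1] := @nxt_spec a b ltac:(lia).
by apply: (@uniq_next _ _ _ b e1 eau); lia.
Qed.

Definition S a b c := d a c == d a b + d b c.

Lemma S_char x0 x1 c : e x0 x1 -> S x0 x1 c = ~~ (d x0 c + 1 == d x1 c).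
Proof.
move=> e01; rewrite /S (d_edge e01).
have e10 : e x1 x0 by rewrite esy.
by case: (@adj_cases _ _ c e10) => h; do 2 case: eqP => ? /=; rewrite ?h //; exfalso; lia.
Qed.

Lemma transfer a u b c : e a u -> d u c + 1 = d a c -> d a c = d a b + d b c ->
  0 < d a b -> d u b + 1 = d a b.
Proof.
move=> eau hc hb pos; have [e1 h1] := nxt_spec pos.
have := d_tri (nxt a b) b c; have := d_tri a (nxt a b) c; rewrite (d_edge e1) => t1 t2.
have hu : u = nxt a b by apply: (@uniq_next _ _ _ c eau e1); lia.
by rewrite hu.
Qed.

Lemma transfer2 a u b c : e a u -> d u b + 1 = d a b -> d a c = d a b + d b c ->
  d u c + 1 = d a c.
Proof.
move=> eau h1 h2; have := d_tri u b c; have := d_tri a u c; rewrite (d_edge eau); lia.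
Qed.


Local Open Scope ring_scope.

Definition BdF (s : seq T) (g : seq T -> int) : int :=
  \sum_(1 <= i < (size s).-1)
    (if ell e (del_at i s) == ell e s then (-1) ^+ i * g (del_at i s) else 0).

Arguments BdF : simpl never.

Lemma del_at_cons i a (s : seq T) : del_at i.+1 (a :: s) = a :: del_at i s.
Proof. by []. Qed.

Lemma ell_cons2 a b (s : seq T) : ell e (a :: b :: s) = (d a b + ell e (b :: s))%N.
Proof. by []. Qed.

Lemma BdF_small s g : (size s <= 2)%N -> BdF s g = 0.
Proof. by move=> h; rewrite /BdF big_geq //; case: s h => [|a [|b [|]]]. Qed.

Lemma BdF_cons3 a b c r g : BdF [:: a, b, c & r] g =
  - (if S a b c then g [:: a, c & r] else 0) - BdF [:: b, c & r] (fun w => g (a :: w)).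
Proof.
rewrite /BdF big_ltn // big_add1 -sumrN.
congr (_ + _).
  have -> : del_at 1 [:: a, b, c & r] = [:: a, c & r] by [].
  rewrite ell_cons2 [ell _ [:: a, b, c & r]]ell_cons2 ell_cons2 /S addnA eqn_add2r.
  by case: ifP => _; rewrite ?oppr0 // expr1 mulN1r.
apply: eq_big_nat => i /andP[i1 _].
case: i i1 => // j _.
rewrite !del_at_cons ell_cons2 [ell _ [:: a, b, c & r]]ell_cons2 eqn_add2l.
by case: ifP => _; rewrite ?oppr0 // exprS mulN1r mulNr.
Qed.

Lemma BdF_ext a t g1 g2 : (forall w, g1 (a :: w) = g2 (a :: w)) ->
  BdF (a :: t) g1 = BdF (a :: t) g2.
Proof.
move=> h; apply: eq_big_nat => i /andP[i1 _].
by case: i i1 => // j _; rewrite del_at_cons h.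
Qed.

Lemma BdF_N s g : BdF s (fun w => - g w) = - BdF s g.
Proof.
rewrite /BdF -sumrN; apply: eq_bigr => i _.
by case: ifP => _; rewrite ?oppr0 // mulrN.
Qed.

Lemma BdF_0 s : BdF s (fun _ => 0) = 0.
Proof. by rewrite /BdF big1 // => i _; case: ifP => _; rewrite ?mulr0. Qed.

Fixpoint hh (x : seq T) : option (int * seq T) :=
  if x is x0 :: t then
    if t is x1 :: r then
      if (2 <= d x0 x1)%N then Some (-1, [:: x0, nxt x0 x1 & t])
      else if (if r is x2 :: _ then S x0 x1 x2 else false) then None
      else if hh t is Some (s, w) then Some (- s, x0 :: w) else None
    else None
  else None.

Definition HF (x : seq T) (g : seq T -> int) : int :=
  if hh x is Some (s, w) then s * g w else 0.

Arguments HF : simpl never.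

Fixpoint nd (x : seq T) : bool :=
  if x is x0 :: t then
    if t is x1 :: r then
      [|| (2 <= d x0 x1)%N, (if r is x2 :: _ then S x0 x1 x2 else false) | nd t]
    else false
  else false.

Lemma hh_eq x0 x1 r : hh [:: x0, x1 & r] =
  if (2 <= d x0 x1)%N then Some (-1, [:: x0, nxt x0 x1, x1 & r])
  else if (if r is x2 :: _ then S x0 x1 x2 else false) then None
  else if hh (x1 :: r) is Some (s, w) then Some (- s, x0 :: w) else None.
Proof. by []. Qed.

Arguments hh : simpl never.

Lemma hh_head a t s w : hh (a :: t) = Some (s, w) -> exists w', w = a :: w'.
Proof.
case: t => [|x1 r]; first by [].
rewrite hh_eq; case: ifP => _; first by case=> _ <-; eexists.
case: ifP => _ //; case: (hh (x1 :: r)) => [[s' w']|] //.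
by move=> [_ <-]; exists w'.
Qed.

Lemma hh_shape x1 x2 r s w : hh [:: x1, x2 & r] = Some (s, w) ->
  ((2 <= d x1 x2)%N /\ w = [:: x1, nxt x1 x2, x2 & r]) \/ exists w', w = [:: x1, x2 & w'].
Proof.
rewrite hh_eq; case: ifP => h2; first by case=> _ <-; left.
case: ifP => _ //; case E: (hh (x2 :: r)) => [[s' w']|] //.
by case=> _ <-; right; have [w'' ->] := hh_head E; eexists.
Qed.

Lemma HF_step x0 x1 z w g : (d x0 x1 < 2)%N -> ~~ S x0 x1 z ->
  HF [:: x0, x1, z & w] g = - HF [:: x1, z & w] (fun v => g (x0 :: v)).
Proof.
move=> h1 h2; have h1' : (2 <= d x0 x1)%N = false by rewrite leqNgt h1.
rewrite /HF hh_eq h1' (negbTE h2).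
by case: (hh [:: x1, z & w]) => [[s v]|]; rewrite ?oppr0 // mulNr.
Qed.

Lemma HF_A x0 x1 w g : (2 <= d x0 x1)%N ->
  HF [:: x0, x1 & w] g = - g [:: x0, nxt x0 x1, x1 & w].
Proof. by move=> h; rewrite /HF hh_eq h mulN1r. Qed.

Lemma HF_B x0 x1 z w g : (d x0 x1 < 2)%N -> S x0 x1 z -> HF [:: x0, x1, z & w] g = 0.
Proof.
move=> h1 h2; have h1' : (2 <= d x0 x1)%N = false by rewrite leqNgt h1.
by rewrite /HF hh_eq h1' h2.
Qed.

Lemma F1 x0 x1 x2 : e x0 x1 -> ~~ S x0 x1 x2 -> (2 <= d x1 x2)%N ->
  ~~ S x0 x1 (nxt x1 x2).
Proof.
move=> e01; rewrite !S_char // !negbK => /eqP h h2.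
have [ey hy] := @nxt_spec x1 x2 ltac:(lia).
have e10 : e x1 x0 by rewrite esy.
have hxy : x0 = nxt x1 x2 by apply: (@uniq_next _ _ _ x2 e10 ey); lia.
by rewrite -hxy d_refl (d_edge e10).
Qed.

Lemma F2 x0 x1 x2 x3 : e x0 x1 -> ~~ S x0 x1 x2 -> S x1 x2 x3 -> ~~ S x0 x1 x3.
Proof.
move=> e01; rewrite (@S_char x0 x1 x2 e01) (@S_char x0 x1 x3 e01) !negbK => /eqP h /eqP h2.
have e10 : e x1 x0 by rewrite esy.
by apply/eqP; apply: (transfer2 e10 h h2).
Qed.

Lemma F3 x0 x1 x2 : e x0 x1 -> S x0 x1 x2 -> x1 != x2 ->
  (2 <= d x0 x2)%N /\ nxt x0 x2 = x1.
Proof.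
move=> e01 /eqP h n12; have := d_pos n12; rewrite (d_edge e01) in h => p.
by split; [lia | apply: nxt_uniq => //; lia].
Qed.

Lemma F4 x0 x1 x2 x3 : e x0 x1 -> S x0 x1 x2 -> S x1 x2 x3 -> x1 != x2 ->
  S x0 x1 x3.
Proof.
move=> e01; rewrite (@S_char x0 x1 x2 e01) (@S_char x0 x1 x3 e01) => h12 /eqP h2 n12.
apply/negP => /eqP h3; move/negP: h12; apply; apply/eqP.
have e10 : e x1 x0 by rewrite esy.
exact: (transfer e10 h3 h2 (d_pos n12)).
Qed.

Lemma F5 x0 x1 x2 : (2 <= d x0 x1)%N -> S x0 x1 x2 -> nxt x0 x2 = nxt x0 x1.
Proof.
move=> h /eqP hS; have [ey hy] := @nxt_spec x0 x1 ltac:(lia).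
by apply: nxt_uniq => //; apply: (transfer2 ey hy hS).
Qed.

Lemma F6 x0 x1 x2 : (2 <= d x0 x1)%N -> S (nxt x0 x1) x1 x2 = S x0 x1 x2.
Proof.
move=> h; have [ey hy] := @nxt_spec x0 x1 ltac:(lia).
have ye : e (nxt x0 x1) x0 by rewrite esy.
apply/idP/idP => /eqP hS; apply/eqP.
  case: (@adj_cases _ _ x2 ye) => h2; first by lia.
  have := @transfer _ _ _ _ ye h2 hS ltac:(lia); lia.
by have := transfer2 ey hy hS; lia.
Qed.

Lemma KEY x : sorted (fun a b : T => a != b) x -> nd x ->
  forall g, HF x (fun z => BdF z g) + BdF x (fun w => HF w g) = g x.
Proof.
elim: x => [|x0 t IH] //; case: t IH => [|x1 r] IH //.
move=> srt ndx g; move: (srt) => /= /andP[n01 sr].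
case: (leqP 2 (d x0 x1)) => h01.
- have [ey hy] := @nxt_spec x0 x1 ltac:(lia).
  have Sy : S x0 (nxt x0 x1) x1 by rewrite /S (d_edge ey); apply/eqP; lia.
  rewrite HF_A // BdF_cons3 Sy.
  case: r srt sr ndx IH => [|x2 r'] srt sr ndx IH.
    rewrite BdF_small // [BdF [:: x0; x1] _]BdF_small //; lia.
  rewrite [BdF [:: nxt x0 x1, x1, x2 & r'] _]BdF_cons3.
  rewrite [BdF [:: x0, x1, x2 & r'] _]BdF_cons3 F6 //.
  rewrite (@BdF_ext x1 _ (fun w => HF (x0 :: w) g) (fun w => - g [:: x0, nxt x0 x1 & w])); last first.
    by move=> w /=; rewrite HF_A.
  rewrite BdF_N.
  case: ifP => hS.
    have h02 : (2 <= d x0 x2)%N by move/eqP: hS; lia.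
    rewrite HF_A // (F5 h01 hS).
    lia.
  lia.
have h01' : (2 <= d x0 x1)%N = false by rewrite leqNgt h01.
have e01 : e x0 x1 by apply: d_one; have := d_pos n01; lia.
case: r srt sr ndx IH => [|x2 r'] srt sr ndx IH.
  by move: ndx; rewrite /= h01'.
have n12 : x1 != x2 by move: sr => /= /andP[].
case hS: (S x0 x1 x2).
- have [h02 hn] := F3 e01 hS n12.
  rewrite (HF_B _ _ h01 hS) add0r BdF_cons3 hS HF_A // hn.
  have -> : BdF [:: x1, x2 & r'] (fun w => HF (x0 :: w) g) = 0.
    case: r' {srt sr ndx IH} => [|x3 r'']; first by rewrite BdF_small.
    rewrite BdF_cons3.
    rewrite (@BdF_ext x2 _ (fun w => HF [:: x0, x1 & w] g) (fun _ => 0)); last first.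
      by move=> w /=; rewrite HF_B.
    rewrite BdF_0; case: ifP => h123; last by rewrite oppr0 subr0.
    by rewrite HF_B // ?oppr0 ?subr0 // (F4 e01 hS h123 n12).
  lia.
have nd' : nd [:: x1, x2 & r'] by move: ndx; rewrite /= h01' hS.
have IH' := IH sr nd' (fun w => g (x0 :: w)).
have step1 : HF [:: x0, x1, x2 & r'] (fun z => BdF z g) =
    HF [:: x1, x2 & r'] (fun z => BdF z (fun w => g (x0 :: w))).
  rewrite /HF hh_eq h01' hS.
  case E: (hh [:: x1, x2 & r']) => [[s w]|] //.
  case: (hh_shape E) => [[h12 ->]|[w' ->]].
    by rewrite BdF_cons3 (negbTE (F1 e01 (negbT hS) h12)) oppr0 sub0r mulrNN.
  by rewrite BdF_cons3 hS oppr0 sub0r mulrNN.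
have step2 : BdF [:: x1, x2 & r'] (fun w => HF (x0 :: w) g) =
    - BdF [:: x1, x2 & r'] (fun w => HF w (fun v => g (x0 :: v))).
  case: r' {srt sr ndx IH nd' IH' step1} => [|x3 r'']; first by rewrite !BdF_small // oppr0.
  rewrite !BdF_cons3.
  rewrite (@BdF_ext x2 _ (fun w => HF [:: x0, x1 & w] g)
             (fun w => - HF (x1 :: w) (fun v => g (x0 :: v)))); last first.
    by move=> w /=; rewrite HF_step // hS.
  rewrite BdF_N.
  case: ifP => h123; last by lia.
  rewrite HF_step //; first by lia.
  exact: (@F2 x0 x1 x2 x3 e01 (negbT hS) h123).
rewrite step1 BdF_cons3 hS step2; lia.
Qed.

Lemma hh_I x s w : sorted (fun a b : T => a != b) x -> hh x = Some (s, w) ->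
  [/\ sorted (fun a b : T => a != b) w, ell e w = ell e x & size w = (size x).+1].
Proof.
elim: x s w => [|x0 t IH] s w //; case: t IH => [|x1 r] IH //.
move=> srt; move: (srt) => /= /andP[n01 sr].
rewrite hh_eq; case: ifP => h01.
  have [ey hy] := @nxt_spec x0 x1 ltac:(lia).
  move=> [_ <-]; split => //.
  - rewrite /= sr !andbT; apply/andP; split.
      by apply/eqP => h; move: (d_edge ey); rewrite -h d_refl.
    by apply/eqP => h; move: hy; rewrite h d_refl; lia.
  - rewrite !ell_cons2 (d_edge ey) /ell /=; lia.
case: ifP => // _.
case E: (hh (x1 :: r)) => [[s' w']|] // [_ <-].
have [sw ew zw] := IH _ _ sr E.
have [w'' hw] := hh_head E.
split.
- by move: sw; rewrite hw /= n01.
- by rewrite hw !ell_cons2 -hw ew.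
- by rewrite /= zw.
Qed.

Lemma nd_ell x : ~~ nd x -> (ell e x <= (size x).-1)%N.
Proof.
elim: x => [|x0 t IH] //; case: t IH => [|x1 r] IH // ndx.
have [h1 h3] : ~~ (2 <= d x0 x1)%N /\ ~~ nd (x1 :: r).
  by move: ndx; rewrite [nd _]/= !negb_or => /and3P[].
have := IH h3; rewrite /ell /= -ltnNge in h1 *; lia.
Qed.

Lemma ell_ge x : sorted (fun a b : T => a != b) x -> ((size x).-1 <= ell e x)%N.
Proof.
elim: x => [|x0 t IH] //; case: t IH => [|x1 r] IH // srt.
move: srt => /= /andP[n01 sr].
have := IH sr; have := d_pos n01; rewrite /ell /=; lia.
Qed.

Lemma size_del i (s : seq T) : (i < size s)%N -> size (del_at i s) = (size s).-1.
Proof.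
move=> h; rewrite /del_at size_cat size_take size_drop h; lia.
Qed.

Lemma sum_tuple n (w : seq T) (F : seq T -> int) : size w = n ->
  \sum_(z : n.-tuple T) (if w == val z then F (val z) else 0) = F w.
Proof.
move=> hw; have tw : size w == n by rewrite hw.
rewrite (bigD1 (Tuple tw)) //= eqxx big1 ?addr0 // => z nz.
case: eqP => // h; move: nz; rewrite (_ : z = Tuple tw) ?eqxx //.
by apply: val_inj.
Qed.

End Metric.
Local Open Scope ring_scope.

Theorem proposition3p1 (T : finType) (e : rel T) :
  is_tree e -> diagonal e.
Proof.
move=> [esy [eirr [econn acyc]]] k l nkl c cc dc.
case: (ltngtP k l) => hkl; last by [].
- pose b := [ffun z : k.+2.-tuple T => \sum_(x : k.+1.-tuple T)
     (if hh e x is Some (s, w) then (if w == val z then s else 0) else 0) * c x].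
  have inI x : c x != 0 -> [/\ sorted (fun a b : T => a != b) x, ell e x = l & nd e x].
    move=> cx; have : in_I e l x.
      by case: (boolP (in_I e l x)) => [//|hx]; rewrite (cc x hx) eqxx in cx.
    move=> /andP[sx /eqP lx]; split => //.
    apply/negP => /negP /nd_ell; rewrite size_tuple lx; lia.
  exists b; split.
    move=> z nz; rewrite ffunE big1 // => x _.
    case: (eqVneq (c x) 0) => [->|cx]; first by rewrite mulr0.
    have [sx lx _] := inI x cx.
    case E: (hh e x) => [[s w]|]; last by rewrite mul0r.
    case: eqP => hw; last by rewrite mul0r.
    have [sw ew _] := hh_I esy econn eirr sx E.
    by move: nz; rewrite -hw /in_I sw ew lx eqxx.
  apply/ffunP => y; rewrite ffunE.
  pose dl := fun w : seq T => (if w == val y then 1 else 0 : int).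
  transitivity (\sum_(z : k.+2.-tuple T) BdF e z dl * b z).
    apply: eq_bigr => z _; rewrite /BdF size_tuple /= mulr_suml; apply: eq_bigr => i _.
    rewrite /dl; case: (_ == _); case: (_ == _); by rewrite /= ?mulr1 ?mulr0 ?mul0r.
  transitivity (\sum_(x : k.+1.-tuple T) c x * HF e x (fun z => BdF e z dl)).
    under eq_bigr do rewrite ffunE mulr_sumr.
    rewrite exchange_big; apply: eq_bigr => x _.
    case: (eqVneq (c x) 0) => [->|cx].
      by rewrite mul0r; apply: big1 => z _; rewrite !mulr0.
    have [sx lx _] := inI x cx.
    rewrite /HF; case E: (hh e x) => [[s w]|]; last first.
      by rewrite mulr0; apply: big1 => z _; rewrite mul0r !mulr0.
    have [_ _ zw] := hh_I esy econn eirr sx E.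
    rewrite -(@sum_tuple _ k.+2 w (fun v => c x * (s * BdF e v dl))); last by rewrite zw size_tuple.
    apply: eq_bigr => z _; case: eqP => _; last by rewrite mul0r mulr0.
    by rewrite [LHS]mulrC -mulrA mulrCA.
  set G := fun w : seq T => HF e w dl.
  transitivity (\sum_(x : k.+1.-tuple T) (c x * dl x - c x * BdF e x G)).
    apply: eq_bigr => x _.
    case: (eqVneq (c x) 0) => [->|cx]; first by rewrite !mul0r subr0.
    have [sx _ nx] := inI x cx.
    by rewrite -(KEY esy econn eirr acyc sx nx dl) mulrDr addrK.
  rewrite sumrB.
  have -> : \sum_(x : k.+1.-tuple T) c x * dl x = c y.
    rewrite (bigD1 y) //= /dl eqxx mulr1 big1 ?addr0 // => x nxy.
    case: eqP => h; last by rewrite mulr0.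
    by move: nxy; rewrite (val_inj h) eqxx.
  suff -> : \sum_(x : k.+1.-tuple T) c x * BdF e x G = 0 by rewrite subr0.
  transitivity (\sum_(w : k.-tuple T) G w * mdiff e c w); last first.
    by apply: big1 => w _; rewrite dc ffunE mulr0.
  under [RHS]eq_bigr do rewrite ffunE mulr_sumr.
  rewrite [RHS]exchange_big; apply: eq_bigr => x _.
  under [RHS]eq_bigr do rewrite mulr_sumr.
  rewrite [RHS]exchange_big /BdF size_tuple /= mulr_sumr.
  apply: eq_big_nat => i /andP[i1 ik].
  have zd : size (del_at i x) = k by rewrite size_del size_tuple //; lia.
  case: (_ == _); last first.
    by rewrite mulr0; symmetry; apply: big1 => w _; rewrite /= mulr0.
  have -> : c x * ((-1) ^+ i * G (del_at i x)) = G (del_at i x) * ((-1) ^+ i * c x).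
    by rewrite [_ ^+ i * _]mulrC mulrCA [c x * _]mulrC.
  rewrite -(@sum_tuple _ k (del_at i x) (fun v => G v * ((-1) ^+ i * c x))) //=.
  by apply: eq_bigr => w _; case: (_ == _); rewrite ?mulr0.
- have c0 x : c x = 0.
    case: (boolP (in_I e l x)) => hx; last exact: cc.
    move: hx => /andP[sx /eqP lx]; have := ell_ge econn sx.
    rewrite size_tuple lx; lia.
  exists 0; split; first by move=> z _; rewrite ffunE.
  apply/ffunP => y; rewrite !ffunE c0; apply: big1 => x _.
  by apply: big1 => i _; rewrite ffunE mulr0; case: ifP.
Qed.
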